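(* Let $Y_1,Y_2$ be real random variables with absolutely continuous distributions, c.d.f.'s $F_1,F_2$ and (unique) copula $C$ of $(Y_1,Y_2)$, and let $D$ be the set of all probability measures on $\mathbb R$. Put $\Delta(u)=F_1(u)+F_2(u)-2C(F_1(u),F_2(u))$, $u\in\mathbb R$. Then there exists $u^*\in\arg\max_{u\in\mathbb R}\Delta(u)$, and $$\max_{m\in D}E_m(Y_1,Y_2)=\Delta(u^* )=E_{\delta_{u^*}}(Y_1,Y_2),$$ i.e. the maximum over $D$ is attained at the Dirac measure $\delta_{u^*}$ (whose c.d.f. is $x\mapsto\mathbb 1\{u^*\le x\}$). If additionally $Y_1\stackrel{d}{=}Y_2$, then $$\max_{m\in D}E_m(Y_1,Y_2)=2\max_{x\in[0,1]}\big(x-C(x,x)\big),$$ and if $x^*\in(0,1)$ is a maximizer of $x\mapsto x-C(x,x)$ on $[0,1]$, the maximum is attained at $m=\delta_{u^*}$ with $u^*=F_1^{-1}(x^* )$.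
   Context: For a finite nonnegative measure $m$ on $\mathbb R$ and real random variables $Y_1,Y_2$, the excursion metric is $$E_m(Y_1,Y_2):=\int_{\mathbb R}\big(\mathbb P(Y_1>u)+\mathbb P(Y_2>u)-2\,\mathbb P(Y_1>u,Y_2>u)\big)\,m(du).$$ *)

(* Defs.v *)
From HB Require Import structures.
From mathcomp Require Import all_boot all_order all_algebra.
From mathcomp Require Import all_classical all_reals all_analysis.
Set Implicit Arguments. Unset Strict Implicit. Unset Printing Implicit Defensive.
Import Order.TTheory GRing.Theory Num.Theory.
Local Open Scope classical_set_scope.
Local Open Scope ring_scope.

Definition cdfR d (T : measurableType d) (R : realType) (P : probability T R)
  (Y : {RV P >-> R}) (u : R) : R := fine (cdf Y u).

Definition is_copula (R : realType) (C : R -> R -> R) : Prop :=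
  (forall u v, 0 <= u <= 1 -> 0 <= v <= 1 -> 0 <= C u v <= 1) /\
  (forall u, 0 <= u <= 1 -> C u 0 = 0 /\ C 0 u = 0 /\ C u 1 = u /\ C 1 u = u) /\
  (forall u1 u2 v1 v2, 0 <= u1 -> u1 <= u2 -> u2 <= 1 ->
      0 <= v1 -> v1 <= v2 -> v2 <= 1 ->
      0 <= C u2 v2 - C u2 v1 - C u1 v2 + C u1 v1).

Definition copula_of d (T : measurableType d) (R : realType) (P : probability T R)
  (Y1 Y2 : {RV P >-> R}) (C : R -> R -> R) : Prop :=
  is_copula C /\
  forall a b : R, fine (P [set t | Y1 t <= a /\ Y2 t <= b]) = C (cdfR Y1 a) (cdfR Y2 b).

Definition abs_cont_RV d (T : measurableType d) (R : realType) (P : probability T R)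
  (Y : {RV P >-> R}) : Prop :=
  distribution P Y `<< (@lebesgue_measure R).

Definition excursion_integrand d (T : measurableType d) (R : realType)
  (P : probability T R) (Y1 Y2 : {RV P >-> R}) (u : R) : R :=
  fine (P [set t | u < Y1 t]) + fine (P [set t | u < Y2 t])
  - 2 * fine (P [set t | u < Y1 t /\ u < Y2 t]).

Definition excursion_metric d (T : measurableType d) (R : realType)
  (P : probability T R) (Y1 Y2 : {RV P >-> R}) (m : {measure set R -> \bar R})
  : \bar R :=
  (\int[m]_u (excursion_integrand Y1 Y2 u)%:E)%E.

Definition Delta d (T : measurableType d) (R : realType) (P : probability T R)
  (Y1 Y2 : {RV P >-> R}) (C : R -> R -> R) (u : R) : R :=
  cdfR Y1 u + cdfR Y2 u - 2 * C (cdfR Y1 u) (cdfR Y2 u).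

Definition quantile (R : realType) (F : R -> R) (x : R) : R :=
  inf [set u | x <= F u].

(* Main.v *)
Require Import Defs.
From HB Require Import structures.
From mathcomp Require Import all_boot all_order all_algebra.
From mathcomp Require Import all_classical all_reals all_analysis.
From mathcomp Require Import lra measurable_realfun.
Import Order.TTheory GRing.Theory Num.Theory.
Import numFieldTopology.Exports numFieldNormedType.Exports.
Set Implicit Arguments. Unset Strict Implicit. Unset Printing Implicit Defensive.
Local Open Scope classical_set_scope.
Local Open Scope ring_scope.

Definition negf d (T : measurableType d) (R : realType) (X : {mfun T >-> R}) : T -> R :=
  fun t => - X t.
Lemma negf_meas d (T : measurableType d) (R : realType) (X : {mfun T >-> R}) :
  measurable_fun setT (negf X).
Proof.
exact: (measurableT_comp (@measurable_realfun.oppr_measurable R setT) (@measurable_funPT _ _ _ _ X)).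
Qed.
HB.instance Definition _ d (T : measurableType d) (R : realType) (X : {mfun T >-> R}) :=
  isMeasurableFun.Build _ _ _ _ (negf X) (negf_meas X).

Definition maxf d (T : measurableType d) (R : realType) (X Y : {mfun T >-> R}) : T -> R :=
  fun t => Num.max (X t) (Y t).
Lemma maxf_meas d (T : measurableType d) (R : realType) (X Y : {mfun T >-> R}) :
  measurable_fun setT (maxf X Y).
Proof.
exact: (measurable_realfun.measurable_maxr (@measurable_funPT _ _ _ _ X) (@measurable_funPT _ _ _ _ Y)).
Qed.
HB.instance Definition _ d (T : measurableType d) (R : realType) (X Y : {mfun T >-> R}) :=
  isMeasurableFun.Build _ _ _ _ (maxf X Y) (maxf_meas X Y).

Section S.
Context d (T : measurableType d) (R : realType) (P : probability T R).

Definition noatom (X : {RV P >-> R}) := forall u : R, P (X @^-1` [set u]) = 0%E.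

Lemma Pfin (A : set T) : measurable A -> P A \is a fin_num.
Proof.
by move=> mA; rewrite ge0_fin_numE ?measure_ge0 // (le_lt_trans (probability_le1 P mA)) // ltry.
Qed.

Lemma cdf_fin (X : {RV P >-> R}) r : cdf X r \is a fin_num.
Proof. by rewrite ge0_fin_numE ?cdf_ge0 // (le_lt_trans (cdf_le1 X r)) // ltry. Qed.

Lemma cdfE (X : {RV P >-> R}) r : cdf X r = P [set t | X t <= r].
Proof.
rewrite /cdf /distribution /pushforward; congr (P _);
  try by apply/seteqP; split=> t /=; rewrite in_itv /=.
Qed.

Lemma ccdfE (X : {RV P >-> R}) r : ccdf X r = P [set t | r < X t].
Proof.
rewrite /ccdf /distribution /pushforward; congr (P _);
  try by apply/seteqP; split=> t /=; rewrite in_itv /= andbT.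
Qed.

Lemma mle (X : {RV P >-> R}) r : measurable [set t | X t <= r].
Proof.
have -> : [set t | X t <= r] = X @^-1` `]-oo, r] by apply/seteqP; split=> t /=; rewrite in_itv.
exact: measurable_funPTI.
Qed.

Lemma noatom_abs (X : {RV P >-> R}) : abs_cont_RV X -> noatom X.
Proof.
move=> ac u.
have hn : (@lebesgue_measure R).-null_set [set u].
  move=> A mA Au; apply/eqP; rewrite eq_le measure_ge0 andbT.
  rewrite -(lebesgue_measure_set1 u).
  by apply: le_measure => //; rewrite inE //; exact: measurable_set1.
exact: (ac _ hn [set u] (measurable_set1 u) (subset_refl _)).
Qed.

Lemma cdfR_mono (X : {RV P >-> R}) : {homo (fun r => fine (cdf X r)) : x y / x <= y}.
Proof. by move=> x y xy; apply: fine_le; [exact: cdf_fin|exact: cdf_fin|exact: cdf_nondecreasing]. Qed.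

Lemma cdfR_01 (X : {RV P >-> R}) r : 0 <= fine (cdf X r) <= 1.
Proof.
rewrite fine_ge0 ?cdf_ge0 //=.
have := cdf_le1 X r; rewrite -[cdf X r]fineK ?cdf_fin //.
Qed.

Lemma PDnull (A B : set T) : measurable A -> measurable B -> P B = 0%E ->
  P A = P (A `\` B).
Proof.
move=> mA mB PB; rewrite (measureDI P mA mB) [X in (_ + X)%E](_ : _ = 0%E) ?adde0 //.
apply/eqP; rewrite eq_le measure_ge0 andbT -PB.
by apply: le_measure => //; rewrite inE //; exact: measurableI.
Qed.

Lemma cdf_lt (X : {RV P >-> R}) r : noatom X -> cdf X r = P [set t | X t < r].
Proof.
move=> na.
have mB : measurable (X @^-1` [set r]) by apply: measurable_funPTI; exact: measurable_set1.
rewrite cdfE (PDnull (mle X r) mB (na r)); congr (P _); apply/seteqP; split=> t /=.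
  by move=> [h1 h2]; rewrite lt_neqAle h1 andbT; apply/eqP.
by move=> h; split; [exact: ltW | move=> e; move: h; rewrite e ltxx].
Qed.

Lemma cdfR_cont (X : {RV P >-> R}) : noatom X -> continuous (fun r : R => fine (cdf X r)).
Proof.
move=> na a; apply/left_right_continuousP; split.
  have e : forall r : R, cdf X r = ccdf (P:=P) (negf X) (- r).
    move=> r; rewrite cdf_lt // ccdfE; congr (P _).
    by apply/seteqP; split=> t /=; rewrite /negf ltrN2.
  apply/cvg_at_leftNP.
  have -> : (fun r : R => fine (cdf X r)) \o -%R = fine \o ccdf (P:=P) (negf X).
    by apply/funext => s /=; rewrite e opprK.
  rewrite e; apply: fine_cvg.
  rewrite fineK; first exact: ccdf_right_continuous.
  by rewrite -e cdf_fin.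
have h := @cdf_right_continuous _ _ _ P X a.
rewrite -[cdf X a]fineK ?cdf_fin // in h.
exact: (fine_cvg h).
Qed.

End S.

Section Main.
Context d (T : measurableType d) (R : realType) (P : probability T R).
Variables (Y1 Y2 : {RV P >-> R}) (C : R -> R -> R).
Hypotheses (na1 : noatom Y1) (na2 : noatom Y2) (hC : copula_of Y1 Y2 C).

Lemma PsplitE (A B : set T) : measurable A -> measurable B ->
  P A = (P (A `&` B) + P (A `&` ~` B))%E.
Proof. by move=> mA mB; rewrite (measureDI P mA mB) setDE addeC. Qed.

Lemma Psplit (A B : set T) : measurable A -> measurable B ->
  fine (P A) = fine (P (A `&` B)) + fine (P (A `&` ~` B)).
Proof.
move=> mA mB; rewrite (PsplitE mA mB) fineD //; apply: Pfin.
  exact: measurableI.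
by apply: measurableI => //; exact: measurableC.
Qed.

Let S1 u := [set t | Y1 t <= u].
Let S2 u := [set t | Y2 t <= u].
Let m1 u : measurable (S1 u) := mle Y1 u.
Let m2 u : measurable (S2 u) := mle Y2 u.

Let pa u := fine (P (S1 u `&` S2 u)).
Let pb u := fine (P (S1 u `&` ~` S2 u)).
Let pc u := fine (P (~` S1 u `&` S2 u)).
Let pe u := fine (P (~` S1 u `&` ~` S2 u)).

Lemma gtC (Y : {RV P >-> R}) u : [set t | u < Y t] = ~` [set t | Y t <= u].
Proof.
apply/seteqP; split=> t /=; rewrite ltNge.
  by move=> /negP.
by move=> /negP.
Qed.

Lemma F1E u : cdfR Y1 u = pa u + pb u.
Proof. by rewrite /cdfR cdfE (Psplit (m1 u) (m2 u)). Qed.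

Lemma F2E u : cdfR Y2 u = pa u + pc u.
Proof. by rewrite /cdfR cdfE (Psplit (m2 u) (m1 u)) /pa /pc setIC [in X in _ + X]setIC. Qed.

Lemma integrandE u : excursion_integrand Y1 Y2 u = pb u + pc u.
Proof.
rewrite /excursion_integrand !gtC.
have -> : [set t | u < Y1 t /\ u < Y2 t] = ~` S1 u `&` ~` S2 u.
  by rewrite -(gtC Y1) -(gtC Y2).
rewrite (Psplit (measurableC (m1 u)) (m2 u)).
rewrite (Psplit (measurableC (m2 u)) (m1 u)).
rewrite -/(pc u) -/(pe u) [~` S2 u `&` S1 u]setIC [~` S2 u `&` ~` S1 u]setIC -/(pb u) -/(pe u).
lra.
Qed.

Lemma DeltaE u : Delta Y1 Y2 C u = pb u + pc u.
Proof.
rewrite /Delta -(proj2 hC u u) F1E F2E -/(pa u); lra.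
Qed.

Lemma integrand_Delta : excursion_integrand Y1 Y2 = Delta Y1 Y2 C.
Proof. by apply/funext => u; rewrite integrandE DeltaE. Qed.

Lemma Delta_ge0 u : 0 <= Delta Y1 Y2 C u.
Proof. by rewrite DeltaE addr_ge0 // fine_ge0 // measure_ge0. Qed.

Let Z := maxf Y1 Y2.

Lemma naZ : noatom (P:=P) Z.
Proof.
move=> u; apply/eqP; rewrite eq_le measure_ge0 andbT.
have mA : measurable (Y1 @^-1` [set u]) by apply: measurable_funPTI; exact: measurable_set1.
have mB : measurable (Y2 @^-1` [set u]) by apply: measurable_funPTI; exact: measurable_set1.
apply: (@le_trans _ _ (P (Y1 @^-1` [set u] `|` Y2 @^-1` [set u]))).
  apply: le_measure; rewrite ?inE.
  - apply: measurable_funPTI; exact: measurable_set1.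
  - exact: measurableU.
  by move=> t /=; rewrite /Z /maxf; case: (leP (Y1 t) (Y2 t)) => h ->; [right|left].
apply: (le_trans (measureU2 P mA mB)).
change (P (Y1 @^-1` [set u]) + P (Y2 @^-1` [set u]) <= 0)%E.
by rewrite na1 na2 adde0.
Qed.

Lemma GE u : fine (cdf (P:=P) Z u) = pa u.
Proof.
rewrite cdfE /pa; congr (fine (P _)); apply/seteqP; split=> t /=;
  rewrite /Z /maxf ge_max.
  by move=> /andP.
by move=> [-> ->].
Qed.

Lemma Delta_cdf u : Delta Y1 Y2 C u =
  fine (cdf Y1 u) + fine (cdf Y2 u) - (fine (cdf (P:=P) Z u) + fine (cdf (P:=P) Z u)).
Proof.
rewrite DeltaE GE -!/(cdfR _ _) F1E F2E; lra.
Qed.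

Lemma Delta_cont : continuous (Delta Y1 Y2 C).
Proof.
move=> x.
have -> : Delta Y1 Y2 C = (fun u => fine (cdf Y1 u) + fine (cdf Y2 u) -
    (fine (cdf (P:=P) Z u) + fine (cdf (P:=P) Z u))).
  by apply/funext => u; rewrite Delta_cdf.
apply: cvgB; apply: cvgD; apply: cdfR_cont => //; exact: naZ.
Qed.


Lemma cdfR_y (X : {RV P >-> R}) : (fun u => fine (cdf X u)) @ +oo --> (1:R).
Proof. exact: (fine_cvg (@cvg_cdfy1 _ _ _ P X)). Qed.

Lemma cdfR_Ny (X : {RV P >-> R}) : (fun u => fine (cdf X u)) @ -oo --> (0:R).
Proof. exact: (fine_cvg (@cvg_cdfNy0 _ _ _ P X)). Qed.

Lemma Delta_fun : Delta Y1 Y2 C = (fun u => fine (cdf Y1 u) + fine (cdf Y2 u) -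
    (fine (cdf (P:=P) Z u) + fine (cdf (P:=P) Z u))).
Proof. by apply/funext => u; rewrite Delta_cdf. Qed.

Lemma Delta_lim_y : Delta Y1 Y2 C @ +oo --> (0:R).
Proof.
rewrite Delta_fun.
have H := cvgB (cvgD (cdfR_y Y1) (cdfR_y Y2)) (cvgD (cdfR_y Z) (cdfR_y Z)).
rewrite (_ : 1 + 1 - (1 + 1) = 0 :> R) in H; last by lra.
exact: H.
Qed.

Lemma Delta_lim_Ny : Delta Y1 Y2 C @ -oo --> (0:R).
Proof.
rewrite Delta_fun.
have H := cvgB (cvgD (cdfR_Ny Y1) (cdfR_Ny Y2)) (cvgD (cdfR_Ny Z) (cdfR_Ny Z)).
rewrite (_ : 0 + 0 - (0 + 0) = 0 :> R) in H; last by lra.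
exact: H.
Qed.

Lemma exists_max : exists us, forall u, Delta Y1 Y2 C u <= Delta Y1 Y2 C us.
Proof.
case: (pselect (exists u0, 0 < Delta Y1 Y2 C u0)) => [[u0 pos]|none]; last first.
  exists 0 => u; apply: (le_trans _ (Delta_ge0 0)); rewrite leNgt; apply/negP => h.
  by apply: none; exists u.
have [M1 [_ hM1]] := cvgr_lt 0 Delta_lim_y _ pos.
have [M2 [_ hM2]] := cvgr_lt 0 Delta_lim_Ny _ pos.
set a := Num.min M2 u0; set b := Num.max M1 u0.
have au0 : a <= u0 by rewrite /a ge_min lexx orbT.
have u0b : u0 <= b by rewrite /b le_max lexx orbT.
have aM2 : a <= M2 by rewrite /a ge_min lexx.
have M1b : M1 <= b by rewrite /b le_max lexx.
have ab : a <= b := le_trans au0 u0b.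
have cw : {within `[a, b], continuous (Delta Y1 Y2 C)}.
  by apply: continuous_subspaceT; exact: Delta_cont.
have [c cab cmax] := EVT_max ab cw.
have u0ab : u0 \in `[a, b] by rewrite in_itv /= au0 u0b.
exists c => u.
case: (ltP u a) => ua.
  apply: ltW; apply: (lt_le_trans (hM2 u (lt_le_trans ua aM2))); exact: cmax.
case: (ltP b u) => bu.
  apply: ltW; apply: (lt_le_trans (hM1 u (le_lt_trans M1b bu))); exact: cmax.
by apply: cmax; rewrite in_itv /= ua bu.
Qed.

Lemma exc_Delta (m : {measure set R -> \bar R}) :
  excursion_metric Y1 Y2 m = (\int[m]_u (Delta Y1 Y2 C u)%:E)%E.
Proof. by rewrite /excursion_metric integrand_Delta. Qed.

Lemma meas_Delta : measurable_fun setT (fun u => (Delta Y1 Y2 C u)%:E).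
Proof.
apply/measurable_realfun.measurable_EFinP.
exact: (measurable_realfun.continuous_measurable_fun Delta_cont).
Qed.

Lemma exc_le (m : probability R R) M : (forall u, Delta Y1 Y2 C u <= M) ->
  (excursion_metric Y1 Y2 m <= M%:E)%E.
Proof.
move=> hM; rewrite exc_Delta.
apply: (@le_trans _ _ (\int[m]_u (cst M%:E u))%E).
  apply: ge0_le_integral => //.
  - by move=> u _; rewrite lee_fin Delta_ge0.
  - exact: meas_Delta.
  - by move=> u _; rewrite lee_fin hM.
rewrite integral_cst // [X in (_ * X)%E](_ : _ = 1%E) ?mule1 //; exact: probability_setT.
Qed.

Lemma exc_dirac a : excursion_metric Y1 Y2 (\d_a) = (Delta Y1 Y2 C a)%:E.
Proof.
rewrite exc_Delta integral_dirac //; last exact: meas_Delta.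
by rewrite diracT mul1e.
Qed.

Lemma cdf_ends (X : {RV P >-> R}) x : 0 < x < 1 ->
  exists a b, a <= b /\ fine (cdf X a) < x /\ x < fine (cdf X b).
Proof.
move=> /andP[x0 x1].
have [Ma [_ hMa]] := cvgr_lt 0 (cdfR_Ny X) _ x0.
have [Mb [_ hMb]] := cvgr_gt 1 (cdfR_y X) _ x1.
set a := Ma - 1; set b := Num.max (Mb + 1) a.
exists a, b; split; first by rewrite /b le_max lexx orbT.
split; first by apply: hMa; rewrite /a; lra.
apply: hMb; apply: (@lt_le_trans _ _ (Mb + 1)); first lra.
by rewrite /b le_max lexx.
Qed.

Lemma cdf_hit (X : {RV P >-> R}) (na : noatom X) x : 0 < x < 1 ->
  exists u, fine (cdf X u) = x.
Proof.
move=> hx; have [a [b [ab [Fa Fb]]]] := cdf_ends X hx.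
have cw : {within `[a, b], continuous (fun u => fine (cdf X u))}.
  by apply: continuous_subspaceT; exact: cdfR_cont.
have : exists2 c, c \in `[a, b] & fine (cdf X c) = x.
  apply: (@IVT R (fun u => fine (cdf X u))) => //.
  by rewrite ge_min (ltW Fa) le_max (ltW Fb) orbT.
by case=> c _ hc; exists c.
Qed.

Lemma quantile_eq (X : {RV P >-> R}) (na : noatom X) x : 0 < x < 1 ->
  cdfR X (quantile (cdfR X) x) = x.
Proof.
move=> hx; have [a [b [ab [Fa Fb]]]] := cdf_ends X hx.
rewrite /quantile.
set S := [set u | x <= cdfR X u].
have Fc : continuous (cdfR X) by exact: cdfR_cont.
have Fm := cdfR_mono X.
have S0 : S !=set0 by exists b; rewrite /S /= /cdfR; exact: ltW.
have lbS : forall u, S u -> a <= u.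
  move=> u Su; rewrite leNgt; apply/negP => ua.
  have := Fm _ _ (ltW ua); move: Su; rewrite /S /= /cdfR; lra.
have hlb : has_lbound S by exists a => u /lbS.
set q := inf S.
apply/eqP; rewrite eq_le; apply/andP; split.
  rewrite leNgt; apply/negP => hq.
  have H := cvgr_gt _ (Fc q) _ hq.
  have [e /= e0 he] : nbhs_ball q (fun y => x < cdfR X y) by apply/nbhs_ballP; exact: H.
  have : S (q - e / 2).
    apply: ltW; apply: he; rewrite /ball /=.
    rewrite (_ : q - (q - e / 2) = e / 2); last by lra.
    rewrite ger0_norm; lra.
  move=> /(ge_inf hlb); rewrite -/q; lra.
rewrite leNgt; apply/negP => hq.
have H := cvgr_lt _ (Fc q) _ hq.
have [e /= e0 he] : nbhs_ball q (fun y => cdfR X y < x) by apply/nbhs_ballP; exact: H.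
have : q + e / 2 <= q.
  rewrite {2}/q; apply: (lb_le_inf S0) => u Su; rewrite leNgt; apply/negP => hu.
  have qu : q <= u := ge_inf hlb Su.
  have : cdfR X u < x.
    apply: he; rewrite /ball /= ler0_norm; lra.
  move: Su; rewrite /S /=; lra.
lra.
Qed.

Lemma part2 (hd : distribution P Y1 = distribution P Y2) :
  exists xstar : R, 0 <= xstar <= 1 /\
        (forall x : R, 0 <= x <= 1 -> x - C x x <= xstar - C xstar xstar) /\
        (forall m : probability R R,
           (excursion_metric Y1 Y2 m <= (2 * (xstar - C xstar xstar))%:E)%E) /\
        (exists m : probability R R,
           excursion_metric Y1 Y2 m = (2 * (xstar - C xstar xstar))%:E).
Proof.
have hF : forall u, cdfR Y2 u = cdfR Y1 u by move=> u; rewrite /cdfR /cdf hd.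
have DF : forall u, Delta Y1 Y2 C u = 2 * (cdfR Y1 u - C (cdfR Y1 u) (cdfR Y1 u)).
  by move=> u; rewrite /Delta hF; lra.
have [[_ [hB _]] _] := hC.
have [us hus] := exists_max.
exists (cdfR Y1 us); split; first exact: cdfR_01.
have g0 : 0 <= cdfR Y1 us - C (cdfR Y1 us) (cdfR Y1 us).
  by have := Delta_ge0 us; rewrite DF; lra.
have hxs : forall x, 0 <= x <= 1 -> x - C x x <= cdfR Y1 us - C (cdfR Y1 us) (cdfR Y1 us).
  move=> x /andP[x0 x1].
  case: (eqVneq x 0) => [->|xn0].
    have [h _] := hB 0 (ltac:(by rewrite lexx ler01)).
    by rewrite h subr0.
  case: (eqVneq x 1) => [->|xn1].
    have [_ [_ [h _]]] := hB 1 (ltac:(by rewrite lexx ler01)).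
    by rewrite h subrr.
  have hx : 0 < x < 1 by rewrite lt_neqAle eq_sym xn0 x0 /= lt_neqAle xn1 x1.
  have [u hu] := cdf_hit na1 hx.
  have := hus u; rewrite !DF /cdfR hu; rewrite /cdfR in g0 *; lra.
split; first exact: hxs.
split.
  by move=> m; apply: exc_le => u; rewrite -DF; exact: hus.
by exists \d_us; rewrite exc_dirac DF.
Qed.

Lemma part3 (hd : distribution P Y1 = distribution P Y2) :
  forall xstar : R, 0 < xstar < 1 ->
        (forall x : R, 0 <= x <= 1 -> x - C x x <= xstar - C xstar xstar) ->
        let ustar := quantile (cdfR Y1) xstar in
        (forall m : probability R R,
           (excursion_metric Y1 Y2 m <= excursion_metric Y1 Y2 (\d_ustar))%E) /\
        excursion_metric Y1 Y2 (\d_ustar) = (2 * (xstar - C xstar xstar))%:E.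
Proof.
have hF : forall u, cdfR Y2 u = cdfR Y1 u by move=> u; rewrite /cdfR /cdf hd.
have DF : forall u, Delta Y1 Y2 C u = 2 * (cdfR Y1 u - C (cdfR Y1 u) (cdfR Y1 u)).
  by move=> u; rewrite /Delta hF; lra.
move=> xs hx hmax us.
have Fus : cdfR Y1 us = xs by exact: quantile_eq.
have key : excursion_metric Y1 Y2 (\d_us) = (2 * (xs - C xs xs))%:E.
  by rewrite exc_dirac DF Fus.
split => //.
move=> m; rewrite key; apply: exc_le => u; rewrite DF.
have := hmax _ (cdfR_01 Y1 u); rewrite /cdfR; lra.
Qed.

End Main.

Theorem mainTheorem5 (d : measure_display) (T : measurableType d) (R : realType)
  (P : probability T R) (Y1 Y2 : {RV P >-> R}) (C : R -> R -> R) :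
  abs_cont_RV Y1 -> abs_cont_RV Y2 -> copula_of Y1 Y2 C ->
  (exists ustar : R,
      (forall u : R, Delta Y1 Y2 C u <= Delta Y1 Y2 C ustar) /\
      (forall m : probability R R,
          (excursion_metric Y1 Y2 m <= (Delta Y1 Y2 C ustar)%:E)%E) /\
      excursion_metric Y1 Y2 (\d_ustar) = (Delta Y1 Y2 C ustar)%:E)
  /\
  (distribution P Y1 = distribution P Y2 ->
     (exists xstar : R, 0 <= xstar <= 1 /\
        (forall x : R, 0 <= x <= 1 -> x - C x x <= xstar - C xstar xstar) /\
        (forall m : probability R R,
           (excursion_metric Y1 Y2 m <= (2 * (xstar - C xstar xstar))%:E)%E) /\
        (exists m : probability R R,
           excursion_metric Y1 Y2 m = (2 * (xstar - C xstar xstar))%:E))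
     /\
     (forall xstar : R, 0 < xstar < 1 ->
        (forall x : R, 0 <= x <= 1 -> x - C x x <= xstar - C xstar xstar) ->
        let ustar := quantile (cdfR Y1) xstar in
        (forall m : probability R R,
           (excursion_metric Y1 Y2 m <= excursion_metric Y1 Y2 (\d_ustar))%E) /\
        excursion_metric Y1 Y2 (\d_ustar) = (2 * (xstar - C xstar xstar))%:E)).
Proof.
move=> a1 a2 hC.
have na1 := noatom_abs a1.
have na2 := noatom_abs a2.
split.
  have [us hus] := exists_max na1 na2 hC.
  exists us; split => //; split.
    by move=> m; apply: (exc_le na1 na2 hC).
  exact: (exc_dirac na1 na2 hC).
move=> hd; split.
  exact: (part2 na1 na2 hC hd).
exact: (part3 na1 na2 hC hd).
Qed.
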